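(* Let $A$ be a commutative ring and $\varphi:L\to L'$ an isogeny of free abelian groups of finite rank whose degree $\deg\varphi=\#(L'/\varphi(L))$ is invertible in $A$. Then the induced homomorphism $\varphi_R:R(L)\to R(L')$ is an isomorphism.
   Context: An isogeny is an injective homomorphism with finite cokernel. For a free abelian group $L$ of finite rank, $R(L)=\varprojlim_kA[L]/J^k$ is the completion of the group ring $A[L]$ (basis $\delta_\ell$) at its augmentation ideal $J$. The map $\varphi_R$ is the continuous $A$-algebra homomorphism induced by $\delta_\ell\mapsto\delta_{\varphi(\ell)}$. *)

(* Defs.v *)
(* Group ring A[L] modelled with multinomials' {malg A[L]}
   (finitely supported functions L -> A, basis delta_l = << l >>);
   multiplication (convolution) defined here since monalg's ring structure
   requires a monomial (non-group) monoid. *)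
From HB Require Import structures.
From mathcomp Require Import all_boot all_algebra finmap.
From mathcomp Require Import monalg.

Set Implicit Arguments.
Unset Strict Implicit.
Unset Printing Implicit Defensive.

Import GRing.Theory.
Local Open Scope ring_scope.

Notation lat n := 'rV[int]_n.

Definition GR (A : comPzRingType) (n : nat) := {malg A[lat n]}.

Definition delta (A : comPzRingType) n (l : lat n) : GR A n := mkmalgU l (1 : A).

Definition grmul (A : comPzRingType) n (x y : GR A n) : GR A n :=
  \sum_(k <- msupp x) \sum_(k' <- msupp y) mkmalgU (k + k') (x@_k * y@_k').

Definition aug (A : comPzRingType) n (x : GR A n) : A := \sum_(k <- msupp x) x@_k.

Definition inJ (A : comPzRingType) n (x : GR A n) : Prop := aug x = 0.

Fixpoint inJpow (A : comPzRingType) n (k : nat) (x : GR A n) : Prop :=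
  match k with
  | 0 => True
  | k'.+1 => exists s : seq (GR A n * GR A n),
      (forall p, p \in s -> inJ p.1 /\ inJpow k' p.2) /\
      x = \sum_(p <- s) grmul p.1 p.2
  end.

Definition grmap (A : comPzRingType) n m (f : lat n -> lat m) (x : GR A n) : GR A m :=
  \sum_(k <- msupp x) mkmalgU (f k) x@_k.

(* Elements of R(L) = lim_k A[L]/J^k: a family (x_k)_k with x_k a
   representative of the class in A[L]/J^k, compatible under the
   projections A[L]/J^(k+1) -> A[L]/J^k. *)
Definition compat (A : comPzRingType) n (x : nat -> GR A n) : Prop :=
  forall k, inJpow k (x k.+1 - x k).

Definition Req (A : comPzRingType) n (x y : nat -> GR A n) : Prop :=
  forall k, inJpow k (x k - y k).

Definition phiR (A : comPzRingType) n m (f : lat n -> lat m)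
  (x : nat -> GR A n) : nat -> GR A m := fun k => grmap f (x k).

Definition phiR_bijective (A : comPzRingType) n m (f : lat n -> lat m) : Prop :=
  (forall x y : nat -> GR A n, compat x -> compat y ->
      Req (phiR f x) (phiR f y) -> Req x y) /\
  (forall z : nat -> GR A m, compat z ->
      exists2 x : nat -> GR A n, compat x & Req (phiR f x) z).

Definition inIm n m (M : 'M[int]_(n, m)) (y : lat m) : Prop :=
  exists l : lat n, y = l *m M.

(* s is a complete system of pairwise distinct representatives of L'/phi(L);
   then size s = #(L'/phi(L)). *)
Definition coset_reps n m (M : 'M[int]_(n, m)) (s : seq (lat m)) : Prop :=
  [/\ uniq s,
      (forall y, exists2 r, r \in s & inIm M (y - r)) &
      (forall r r', r \in s -> r' \in s -> inIm M (r - r') -> r = r')].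

(* Main.v *)
Require Import Defs.
From HB Require Import structures.
From mathcomp Require Import all_boot all_algebra finmap.
From mathcomp Require Import monalg.
From Stdlib Require Import ClassicalEpsilon.
Import GRing.Theory.
Local Open Scope ring_scope.

Section GRR.
Variables (A : comPzRingType) (n : nat).
Local Notation K := 'rV[int]_n.
Local Notation G := {malg A[K]}.
Implicit Types (g : G).

Definition gone : G := << (1:A) *g (0:K) >>.

Lemma grmull g1 g2 : grmul g1 g2 =
  \sum_(k1 <- msupp g1) \sum_(k2 <- msupp g2) << g1@_k1 * g2@_k2 *g (k1 + k2)%R >>.
Proof. by []. Qed.

Lemma grmullw {d1 d2 : {fset K}} {g1 g2 : G} :
  (msupp g1 `<=` d1)%fset -> (msupp g2 `<=` d2)%fset ->
  grmul g1 g2 = \sum_(k1 <- d1) \sum_(k2 <- d2) << g1@_k1 * g2@_k2 *g (k1 + k2)%R >>.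
Proof.
move=> le_d1 le_d2; rewrite grmull (big_fset_incl _ le_d1) /=.
  apply/eq_bigr=> k1 _; apply/big_fset_incl => // k _ /mcoeff_outdom ->.
  by rewrite mulr0 monalgU0.
move=> k _ /mcoeff_outdom g1k.
by rewrite big1 => // k' _; rewrite g1k mul0r monalgU0.
Qed.

Lemma grmulC g1 g2 : grmul g1 g2 = grmul g2 g1.
Proof.
rewrite !grmull exchange_big /=; apply/eq_bigr=> k1 _; apply/eq_bigr=> k2 _.
by rewrite mulrC addrC.
Qed.

Lemma grmul0g g : grmul 0 g = 0.
Proof. by rewrite grmull msupp0 big_seq_fset0. Qed.

Lemma grmulUg (c : A) (k : K) g :
  grmul << c *g k >> g = \sum_(k' <- msupp g) << c * g@_k' *g (k + k')%R >>.
Proof.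
rewrite (grmullw msuppU_le (fsubset_refl _)) big_seq_fset1.
by apply/eq_bigr => k' _; rewrite mcoeffUU.
Qed.

Lemma grmulUU (c1 c2 : A) (k1 k2 : K) :
  grmul << c1 *g k1 >> << c2 *g k2 >> = << c1 * c2 *g (k1 + k2)%R >>.
Proof. by rewrite (grmullw msuppU_le msuppU_le) !big_seq_fset1 !mcoeffUU. Qed.

Lemma grmulEl1 g1 g2 :
  grmul g1 g2 = \sum_(k1 <- msupp g1) grmul << g1@_k1 *g k1 >> g2.
Proof. by apply/eq_bigr=> k _; rewrite grmulUg. Qed.

Lemma grmul1g g : grmul gone g = g.
Proof.
rewrite grmulUg [RHS]monalgE.
by apply/eq_bigr=> kg _; rewrite mul1r add0r.
Qed.

Lemma grmulgDl g1 g2 g : grmul (g1 + g2) g = grmul g1 g + grmul g2 g.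
Proof.
rewrite [in RHS](grmullw (fsubsetUl _ (msupp g2)) (fsubset_refl _)).
rewrite [in RHS](grmullw (fsubsetUr (msupp g1) _) (fsubset_refl _)).
rewrite (grmullw (msuppD_le _ _) (fsubset_refl _)).
rewrite -big_split /=; apply/eq_bigr=> k1 _.
rewrite -big_split /=; apply/eq_bigr=> k2 _.
by rewrite mcoeffD mulrDl monalgUD.
Qed.

Lemma grmulgDr g g1 g2 : grmul g (g1 + g2) = grmul g g1 + grmul g g2.
Proof. by rewrite !(grmulC g) grmulgDl. Qed.

Lemma grmulg0 g : grmul g 0 = 0.
Proof. by rewrite grmulC grmul0g. Qed.

Lemma grmulA g1 g2 g3 : grmul g1 (grmul g2 g3) = grmul (grmul g1 g2) g3.
Proof.
rewrite [RHS](big_morph ((@grmul A n)^~ _) (fun _ _ => grmulgDl _ _ _) (grmul0g _)).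
rewrite grmulEl1; apply/eq_bigr=> k1 _.
rewrite [LHS](big_morph (@grmul A n _) (fun _ _ => grmulgDr _ _ _) (grmulg0 _)).
rewrite [RHS](big_morph ((@grmul A n)^~ _) (fun _ _ => grmulgDl _ _ _) (grmul0g _)).
apply/eq_bigr=> k2 _.
rewrite [LHS](big_morph (@grmul A n _) (fun _ _ => grmulgDr _ _ _) (grmulg0 _)).
idtac.
rewrite grmulUg; apply/eq_bigr => k3 _; by rewrite grmulUU mulrA addrA.
Qed.

End GRR.

HB.instance Definition _ (A : comPzRingType) (n : nat) :=
  GRing.Zmodule.on (GR A n).
HB.instance Definition _ (A : comPzRingType) (n : nat) :=
  GRing.Zmodule_isComPzRing.Build (GR A n)
  (@grmulA A n) (@grmulC A n) (@grmul1g A n) (@grmulgDl A n).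

Module P2.
Set Implicit Arguments.
Unset Strict Implicit.

Section Aug.
Variables (A : comPzRingType) (n : nat).
Local Notation K := 'rV[int]_n.
Local Notation G := (GR A n).
Implicit Types (x y : G).

Lemma mulE x y : x * y = grmul x y. Proof. by []. Qed.

Lemma grmulE x y : x * y =
  \sum_(k <- msupp x) \sum_(k' <- msupp y) << x@_k * y@_k' *g (k + k')%R >>.
Proof. by []. Qed.

Lemma augE x : aug x = \sum_(k <- msupp x) x@_k.
Proof. by []. Qed.

Lemma inJpowS k x : inJpow k.+1 x <-> exists s : seq (G * G),
      (forall p, p \in s -> inJ p.1 /\ inJpow k p.2) /\
      x = \sum_(p <- s) p.1 * p.2.
Proof. by []. Qed.

Lemma augw {d : {fset K}} {x : G} : (msupp x `<=` d)%fset -> aug x = \sum_(k <- d) x@_k.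
Proof.
move=> le; rewrite augE (big_fset_incl _ le) // => k _ /mcoeff_outdom -> //.
Qed.

Lemma augD x y : aug (x + y) = aug x + aug y.
Proof.
rewrite (augw (msuppD_le x y)) (augw (fsubsetUl _ (msupp y))) (augw (fsubsetUr (msupp x) _)).
by rewrite -big_split; apply: eq_bigr => k _; rewrite mcoeffD.
Qed.

Lemma aug0 : aug (0 : G) = 0.
Proof. by rewrite augE msupp0 big_seq_fset0. Qed.

Lemma augN x : aug (- x) = - aug x.
Proof. by apply/eqP; rewrite -subr_eq0 opprK -augD addNr aug0. Qed.

Lemma augB x y : aug (x - y) = aug x - aug y.
Proof. by rewrite augD augN. Qed.

Lemma aug_sum (I : Type) (r : seq I) (P : pred I) (F : I -> G) :
  aug (\sum_(i <- r | P i) F i) = \sum_(i <- r | P i) aug (F i).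
Proof. exact: (big_morph _ augD aug0). Qed.

Lemma aug_sum' (I : Type) (r : seq I) (P : pred I) (F : I -> {malg A[K]}) :
  aug (\sum_(i <- r | P i) F i) = \sum_(i <- r | P i) aug (F i).
Proof. exact: (big_morph _ augD aug0). Qed.

Lemma augU (c : A) (k : K) : aug << c *g k >> = c.
Proof. by rewrite (augw msuppU_le) big_seq_fset1 mcoeffUU. Qed.

Lemma augM x y : aug (x * y) = aug x * aug y.
Proof.
rewrite grmulE aug_sum augE mulr_suml; apply: eq_bigr => k _.
by rewrite aug_sum mulr_sumr; apply: eq_bigr => k' _; rewrite augU.
Qed.

Lemma aug1 : aug (1 : G) = 1.
Proof. exact: augU. Qed.

Lemma augX x i : aug (x ^+ i) = aug x ^+ i.
Proof. by elim: i => [|i IH]; rewrite ?expr0 ?aug1 // !exprS augM IH. Qed.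

Lemma J0 k : inJpow k (0 : G).
Proof. by case: k => // k; apply/inJpowS; exists [::]; rewrite big_nil. Qed.

Lemma JD k x y : inJpow k x -> inJpow k y -> inJpow k (x + y).
Proof.
case: k => // k /inJpowS [s [Hs ->]] /inJpowS [t [Ht ->]]; apply/inJpowS.
exists (s ++ t); split.
  by move=> p; rewrite mem_cat => /orP[/Hs|/Ht].
by rewrite big_cat.
Qed.

Lemma JMl k w x : inJpow k x -> inJpow k (w * x).
Proof.
case: k => // k /inJpowS [s [Hs ->]]; apply/inJpowS.
exists [seq (w * p.1, p.2) | p <- s]; split.
  move=> p /mapP[q qs ->] /=; have [h1 h2] := Hs q qs; split => //.
  by rewrite /inJ augM h1 mulr0.
rewrite big_map mulr_sumr; apply: eq_bigr => p _ /=.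
by rewrite mulrA.
Qed.

Lemma JN k x : inJpow k x -> inJpow k (- x).
Proof. by move=> h; rewrite -mulN1r; apply: JMl. Qed.

Lemma JB k x y : inJpow k x -> inJpow k y -> inJpow k (x - y).
Proof. by move=> hx hy; apply: JD => //; apply: JN. Qed.

Lemma Jsum k (I : Type) (r : seq I) (P : pred I) (F : I -> G) :
  (forall i, P i -> inJpow k (F i)) -> inJpow k (\sum_(i <- r | P i) F i).
Proof. by move=> h; apply: big_ind => //; [apply: J0 | apply: JD]. Qed.

Lemma JJ k (a b : G) : inJ a -> inJpow k b -> inJpow k.+1 (a * b).
Proof.
move=> ha hb; apply/inJpowS; exists [:: (a, b)]; split.
  by move=> p; rewrite inE => /eqP ->.
by rewrite big_seq1.
Qed.

Lemma Jmono1 k x : inJpow k.+1 x -> inJpow k x.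
Proof.
elim: k x => // k IH x /inJpowS [s [Hs ->]]; rewrite big_seq; apply: Jsum => p ps.
by have [h1 /IH h2] := Hs p ps; apply: JJ.
Qed.

Lemma Jle j k x : (j <= k)%N -> inJpow k x -> inJpow j x.
Proof.
elim: k x => [|k IH] x; first by rewrite leqn0 => /eqP ->.
rewrite leq_eqVlt => /orP[/eqP -> //|]; rewrite ltnS => jk /Jmono1; exact: IH.
Qed.

Lemma Jmul a b x y : inJpow a x -> inJpow b y -> inJpow (a + b) (x * y).
Proof.
elim: a x => [|a IH] x.
  by move=> _ hy; rewrite add0n; apply: JMl.
move=> /inJpowS [s [Hs ->]] hy; rewrite mulr_suml big_seq addSn; apply: Jsum => p ps.
have [h1 h2] := Hs p ps; rewrite -mulrA; apply: JJ => //; exact: IH.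
Qed.

Lemma J1 x : inJ x -> inJpow 1 x.
Proof. by move=> h; rewrite -[x]mulr1; apply: JJ. Qed.

Lemma J1inv k x : inJpow k.+1 x -> inJ x.
Proof.
move=> /(@Jle 1 k.+1 _ (isT : (1 <= k.+1)%N)) /inJpowS [s [Hs ->]]; rewrite /inJ aug_sum big_seq.
by apply: big1 => p ps; have [h1 _] := Hs p ps; rewrite augM h1 mul0r.
Qed.

Lemma mulUU (c1 c2 : A) (k1 k2 : K) :
  (<< c1 *g k1 >> : G) * (<< c2 *g k2 >> : G) = << c1 * c2 *g (k1 + k2)%R >> :> G.
Proof. exact: grmulUU. Qed.

End Aug.

Section Map.
Variables (A : comPzRingType) (n m : nat) (f : 'rV[int]_n -> 'rV[int]_m).
Hypothesis hf : forall a b, f (a + b) = f a + f b.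
Local Notation K := 'rV[int]_n.
Implicit Types (x y : GR A n).

Lemma f0 : f 0 = 0.
Proof. by apply/eqP; rewrite -(addrI (f 0) (_ : f 0 + f 0 = f 0 + 0)) // addr0 -hf addr0. Qed.

Lemma grmapE x : grmap f x = \sum_(k <- msupp x) << x@_k *g f k >> :> GR A m.
Proof. by []. Qed.

Lemma grmapw {d : {fset K}} {x} : (msupp x `<=` d)%fset ->
  grmap f x = \sum_(k <- d) << x@_k *g f k >> :> GR A m.
Proof.
move=> le; rewrite grmapE (big_fset_incl _ le) // => k _ /mcoeff_outdom ->.
by rewrite monalgU0.
Qed.

Lemma grmapD x y : grmap f (x + y) = grmap f x + grmap f y.
Proof.
rewrite (grmapw (msuppD_le x y)) (grmapw (fsubsetUl _ (msupp y))) (grmapw (fsubsetUr (msupp x) _)).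
by rewrite -big_split; apply: eq_bigr => k _; rewrite mcoeffD monalgUD.
Qed.

Lemma grmap0 : grmap f (0 : GR A n) = 0.
Proof. by rewrite grmapE msupp0 big_seq_fset0. Qed.

Lemma grmapN x : grmap f (- x) = - grmap f x.
Proof. by apply/eqP; rewrite -subr_eq0 opprK -grmapD addNr grmap0. Qed.

Lemma grmapB x y : grmap f (x - y) = grmap f x - grmap f y.
Proof. by rewrite grmapD grmapN. Qed.

Lemma grmap_sum (I : Type) (r : seq I) (P : pred I) (F : I -> GR A n) :
  grmap f (\sum_(i <- r | P i) F i) = \sum_(i <- r | P i) grmap f (F i).
Proof. exact: (big_morph _ grmapD grmap0). Qed.

Lemma grmapU (c : A) (k : K) : grmap f << c *g k >> = << c *g f k >>.
Proof. by rewrite (grmapw msuppU_le) big_seq_fset1 mcoeffUU. Qed.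

Lemma grmapM x y : grmap f (x * y) = grmap f x * grmap f y.
Proof.
rewrite grmulE grmap_sum !grmapE mulr_suml; apply: eq_bigr => k _.
rewrite grmap_sum mulr_sumr; apply: eq_bigr => k' _.
by rewrite grmapU mulUU hf.
Qed.

Lemma grmap1 : grmap f (1 : GR A n) = 1.
Proof. by rewrite (grmapU 1 0) f0. Qed.

Lemma aug_grmap x : aug (grmap f x) = aug x.
Proof. by rewrite grmapE aug_sum augE; apply: eq_bigr => k _; rewrite augU. Qed.

Lemma grmapJ k x : inJpow k x -> inJpow k (grmap f x).
Proof.
elim: k x => // k IH x /inJpowS [s [Hs ->]]; rewrite grmap_sum big_seq.
apply: Jsum => p ps; have [h1 h2] := Hs p ps; rewrite grmapM; apply: JJ; last exact: IH.
by rewrite /inJ aug_grmap.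
Qed.

End Map.

Lemma grmap_comp (A : comPzRingType) n m p (f : 'rV[int]_n -> 'rV[int]_m)
  (g : 'rV[int]_m -> 'rV[int]_p) (h : 'rV[int]_n -> 'rV[int]_p) (x : GR A n) :
  (forall l, g (f l) = h l) -> grmap g (grmap f x) = grmap h x.
Proof.
move=> gh; rewrite [grmap f x]grmapE grmap_sum grmapE; apply: eq_bigr => k _.
by rewrite grmapU gh.
Qed.

End P2.
Import P2.
Lemma prod_id (R : comPzRingType) (a b x y : R) :
  a * b - x * y = x * (b - y) + (a - x) * y + (a - x) * (b - y).
Proof.
rewrite -addrA -mulrDr [y + _]addrC subrK mulrBr mulrBl addrC.
by rewrite addrA subrK.
Qed.

Lemma powid (R : comPzRingType) (p t X : R) :
  p * t - 1 - (X + (t - 1)) = (p - 1 - X) + (t - 1) * (p - 1).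
Proof.
rewrite mulrBr mulr1 mulrBl mul1r [t * p]mulrC.
rewrite opprD !addrA; congr (_ + _).
by rewrite [RHS]addrC !addrA addNr add0r [RHS]addrC !addrA.
Qed.

Lemma alg4 (R : comPzRingType) (D a b Fa Fb : R) j :
  Fa * Fb - D ^+ j.+1 * (a * b) =
  D * a * (Fb - D ^+ j * b) + (Fa - D * a) * (D ^+ j * b) + (Fa - D * a) * (Fb - D ^+ j * b).
Proof. by rewrite exprS mulrACA prod_id. Qed.

Lemma alg_inv (R : comPzRingType) (U D : R) j z :
  U * D = 1 -> z = U ^+ j * (D ^+ j * z).
Proof. by move=> h; rewrite mulrA -exprMn h expr1n mul1r. Qed.

Lemma alg_surj (R : comPzRingType) (U D : R) j z :
  U * D = 1 -> D ^+ j * (U ^+ j * z) = z.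
Proof. by move=> h; rewrite mulrA -exprMn [D * U]mulrC h expr1n mul1r. Qed.

Lemma alg_s2 (R : comPzRingType) (z Fx Fw : R) :
  - (Fw - (z - Fx)) = z - (Fx + Fw).
Proof. by rewrite opprB opprD addrA. Qed.

Lemma monalgE' (A : comPzRingType) n (x : GR A n) :
  x = \sum_(k <- msupp x) << x@_k *g k >> :> GR A n.
Proof. exact: monalgE. Qed.

Section Dmap.
Variables (A : comPzRingType) (n d : nat) (u : A).
Hypothesis hu : d%:R * u = 1.
Local Notation K := 'rV[int]_n.
Local Notation G := (GR A n).
Definition md (l : K) : K := l *+ d.
Local Notation F := (grmap md).
Definition C (c : A) : G := << c *g (0 : K) >>.
Definition dl (k : K) : G := << (1 : A) *g k >>.
Local Notation D := (d%:R : G).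

Lemma md_add a b : md (a + b) = md a + md b.
Proof. by rewrite /md mulrnDl. Qed.

Lemma C_mul c c' : C c * C c' = C (c * c').
Proof. by rewrite /C mulUU addr0. Qed.

Lemma C1 : C 1 = 1.
Proof. by []. Qed.

Lemma Dnat : D = C d%:R.
Proof. by rewrite /C monalgUMn. Qed.

Lemma UD : C u * D = 1.
Proof. by rewrite Dnat C_mul mulrC hu. Qed.

Lemma F_C c x : F (C c * x) = C c * F x.
Proof. by rewrite grmapM ?grmapU ?f0 //; exact: md_add. Qed.

Lemma F_dl k : F (dl k) = dl k ^+ d.
Proof.
rewrite grmapU /md /dl; elim: d => [|e IH]; first by rewrite mulr0n expr0.
by rewrite exprS -IH mulUU mulr1 mulrS.
Qed.

Lemma Jdl k i : inJ (dl k ^+ i - 1).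
Proof. by rewrite /inJ augB augX augU aug1 expr1n subrr. Qed.

Lemma Jt k : inJ (dl k - 1).
Proof. by have := Jdl k 1; rewrite expr1. Qed.

Lemma Epow k e : inJpow 2 (dl k ^+ e - 1 - e%:R * (dl k - 1)).
Proof.
elim: e => [|e IH]; first by rewrite expr0 subrr mul0r subrr; apply: J0.
rewrite mulrSr mulrDl mul1r exprSr powid; apply: JD => //.
by apply: (@Jmul _ _ 1 1); apply: J1; [apply: Jt | apply: Jdl].
Qed.

Lemma decomp (x : G) : inJ x -> x = \sum_(k <- msupp x) C (x@_k) * (dl k - 1).
Proof.
move=> hx; rewrite [LHS]monalgE'.
under [RHS]eq_bigr => k _ do rewrite mulrBr mulr1 /C /dl mulUU mulr1 add0r.
rewrite sumrB.
have -> : \sum_(i <- msupp x) << x@_i *g (0:K) >> = 0 :> G.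
  rewrite -raddf_sum -augE hx; exact: monalgU0.
by rewrite subr0.
Qed.

Lemma LemB (p : G) : inJ p -> inJpow 2 (F p - D * p).
Proof.
move=> hp; rewrite [in F p](decomp p hp) [in D * p](decomp p hp) grmap_sum mulr_sumr -sumrB.
apply: Jsum => k _; rewrite F_C grmapB F_dl (@grmap1 A n n md md_add).
rewrite mulrCA -mulrBr; apply: JMl; exact: Epow.
Qed.




Lemma KDstep j (a b : G) : inJ a -> inJpow j b ->
  (forall z : G, inJpow j z -> inJpow j.+1 (F z - D ^+ j * z)) ->
  inJpow j.+2 (F (a * b) - D ^+ j.+1 * (a * b)).
Proof.
move=> h1 h2 IH.
rewrite (@grmapM A n n md md_add) alg4.
apply: JD; [apply: JD|].
- rewrite -mulrA; apply: JMl.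
  by have := Jmul (J1 h1) (IH _ h2); rewrite add1n.
- by have := Jmul (LemB _ h1) (JMl (D ^+ j) h2); rewrite add2n.
- apply: (@Jle _ _ j.+2 (2 + j.+1)) => //.
  exact: Jmul (LemB _ h1) (IH _ h2).
Qed.

Lemma KD j (z : G) : inJpow j z -> inJpow j.+1 (F z - D ^+ j * z).
Proof.
elim: j z => [|j IH] z.
  move=> _; rewrite expr0 mul1r; apply: J1.
  by rewrite /inJ augB aug_grmap subrr.
move=> /inJpowS [s [Hs ->]]; rewrite grmap_sum mulr_sumr -sumrB big_seq.
apply: Jsum => p ps; have [h1 h2] := Hs p ps.
exact: KDstep.
Qed.

Lemma Inj k (z : G) : inJpow k (F z) -> inJpow k z.
Proof.
move=> hF; suff: forall j, (j <= k)%N -> inJpow j z by apply.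
elim => // j IH jk.
have hj := IH (ltnW jk).
have e := KD _ _ hj.
have hF' := Jle jk hF.
have h : inJpow j.+1 (D ^+ j * z).
  by rewrite -(subKr (F z) (D ^+ j * z)); apply: JB.
exact: (eq_rect _ (inJpow j.+1) (JMl (C u ^+ j) h) _ (esym (@alg_inv _ _ _ j z UD))).
Qed.

Lemma Surj k (z : G) : exists x, inJpow k (z - F x).
Proof.
elim: k => [|k [x hx]]; first by exists 0.
exists (x + C u ^+ k * (z - F x)).
have e := KD _ _ (JMl (C u ^+ k) hx).
have e' := eq_rect _ (fun t => inJpow k.+1 (F (C u ^+ k * (z - F x)) - t)) e _ (@alg_surj _ _ _ k (z - F x) UD).
rewrite grmapD.
exact: (eq_rect _ (inJpow k.+1) (JN e') _ (@alg_s2 G z (F x) (F (C u ^+ k * (z - F x))))).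
Qed.
End Dmap.

Module P7.
Set Implicit Arguments.
Unset Strict Implicit.

Section Lat.
Variables (n m : nat) (M : 'M[int]_(n, m)).
Local Notation L' := 'rV[int]_m.

Lemma Im0 : inIm M 0.
Proof. by exists 0; rewrite mul0mx. Qed.

Lemma ImD a b : inIm M a -> inIm M b -> inIm M (a + b).
Proof. by move=> [l ->] [l' ->]; exists (l + l'); rewrite mulmxDl. Qed.

Lemma ImN a : inIm M a -> inIm M (- a).
Proof. by move=> [l ->]; exists (- l); rewrite mulNmx. Qed.

Lemma ImB a b : inIm M a -> inIm M b -> inIm M (a - b).
Proof. by move=> ha hb; apply: ImD => //; apply: ImN. Qed.

Lemma Imsum (I : Type) (r : seq I) (F : I -> L') :
  (forall i, inIm M (F i)) -> inIm M (\sum_(i <- r) F i).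
Proof. by move=> h; apply: big_ind => //; [apply: Im0 | apply: ImD]. Qed.

Lemma mulmxMn (l : 'rV[int]_n) k : (l *+ k) *m M = (l *m M) *+ k.
Proof.
by elim: k => [|k IH]; rewrite ?mulr0n ?mul0mx // !mulrS mulmxDl IH.
Qed.

Lemma dkill (s : seq L') : coset_reps M s -> forall y, inIm M (y *+ size s).
Proof.
move=> [us rep dis] y.
have ex : forall r : L', exists r', r' \in s /\ inIm M (y + r - r').
  by move=> r; have [r' r's h] := rep (y + r); exists r'.
pose rho r := proj1_sig (constructive_indefinite_description _ (ex r)).
have rhoP : forall r, rho r \in s /\ inIm M (y + r - rho r).
  by move=> r; exact: (proj2_sig (constructive_indefinite_description _ (ex r))).
have inj : {in s &, injective rho}.
  move=> r r' rs r's e; apply: dis => //.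
  have := ImB (rhoP r).2 (rhoP r').2; rewrite e.
  have -> : y + r - rho r' - (y + r' - rho r') = r - r'.
    by rewrite opprB addrA subrK opprD addrA [y + r]addrC addrK.
  done.
have u1 : uniq (map rho s) by rewrite map_inj_in_uniq.
have sub : {subset map rho s <= s} by move=> x /mapP[r _ ->]; exact: (rhoP r).1.
have [_ eqs] := uniq_min_size u1 sub (eq_leq (esym (size_map rho s))).
have pe : perm_eq (map rho s) s by apply: uniq_perm.
have := Imsum s (fun r => (rhoP r).2).
have e : \sum_(i <- s) rho i = \sum_(i <- s) i.
  by rewrite -(big_map rho xpredT idfun) (perm_big _ pe).
rewrite sumrB big_split /= e addrK.
by rewrite big_const_seq count_predT iter_addr_0.
Qed.
End Lat.

End P7.
Import P7.

Lemma alg_c (R : comPzRingType) (z1 z0 a1 a0 : R) :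
  - (z1 - a1) + (z1 - z0) + (z0 - a0) = a1 - a0.
Proof. by rewrite opprB [a1 - z1 + _]addrA subrK [a1 - z0 + _]addrA subrK. Qed.

Theorem mainTheorem10 (A : comPzRingType) (n m : nat) (M : 'M[int]_(n, m)) :
  injective (fun l : 'rV[int]_n => l *m M) ->
  (exists2 s : seq 'rV[int]_m, coset_reps M s &
     exists u : A, (size s)%:R * u = 1) ->
  phiR_bijective A (fun l : 'rV[int]_n => l *m M).
Proof.
move=> hinj [s hs [u hu]].
set phi := (fun l : 'rV[int]_n => l *m M).
have phiD : forall a b, phi (a + b) = phi a + phi b by move=> a b; rewrite /phi mulmxDl.
have ex := dkill hs.
pose psi y := proj1_sig (constructive_indefinite_description _ (ex y)).
have psiP : forall y, y *+ size s = psi y *m M.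
  by move=> y; exact: (proj2_sig (constructive_indefinite_description _ (ex y))).
have psiD : forall a b, psi (a + b) = psi a + psi b.
  by move=> a b; apply: hinj; rewrite /= mulmxDl -!psiP mulrnDl.
have psiphi : forall l, psi (phi l) = md n (size s) l.
  by move=> l; apply: hinj; rewrite /= -psiP /md mulmxMn.
have phipsi : forall y, phi (psi y) = md m (size s) y.
  by move=> y; rewrite /phi -psiP.
have injl : forall k (t : GR A n), inJpow k (grmap phi t) -> inJpow k t.
  move=> k t h; apply: (Inj _ _ _ _ hu).
  have h2 := grmapJ psiD h.
  exact: (eq_rect _ (inJpow k) h2 _ (grmap_comp t psiphi)).
split.
  move=> x y _ _ H k; apply: injl.
  exact: (eq_rect _ (inJpow k) (H k) _ (esym (grmapB phi (x k) (y k)))).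
move=> z hz.
have exX : forall k, exists X : GR A n, inJpow k (z k - grmap phi X).
  move=> k; have [w hw] := Surj _ _ _ _ hu k (z k).
  exists (grmap psi w).
  exact: (eq_rect _ (fun t => inJpow k (z k - t)) hw _ (esym (grmap_comp w phipsi))).
pose X k := proj1_sig (constructive_indefinite_description _ (exX k)).
have XP : forall k, inJpow k (z k - grmap phi (X k)).
  by move=> k; exact: (proj2_sig (constructive_indefinite_description _ (exX k))).
exists X.
  move=> k; apply: injl.
  have e1 := Jle (leqnSn k) (XP k.+1).
  have h := JD (JD (JN e1) (hz k)) (XP k).
  have h' := eq_rect _ (inJpow k) h _ (alg_c _ _ _ _ _).
  exact: (eq_rect _ (inJpow k) h' _ (esym (grmapB phi (X k.+1) (X k)))).
move=> k; exact: (eq_rect _ (inJpow k) (JN (XP k)) _ (opprB _ _)).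
Qed.
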